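(* Let $q\in(0,1)$, $\beta<1$ real, $n\in\mathbb{N}_0$, $z\in\mathbb{C}\setminus\{0\}$, and let $\tau\neq0$ satisfy $q(\tau+\tau^{-1})=\beta(z+z^{-1})$. Then \[ p_n^{(q,\beta)}(z+z^{-1};q)=\frac{(q;q)_n}{(\beta;q)_n}\sum_{k=0}^{n}\frac{(q\tau z^{-1};q)_k(q\tau^{-1}z;q)_{n-k}}{(q;q)_k(q;q)_{n-k}}z^{2k-n}, \] and (whenever the terms below are defined) \[ p_n^{(q,\beta)}(z+z^{-1};q)=\frac{(q\tau^{-1}z;q)_n}{z^n(\beta;q)_n}\,{}_2\phi_1\!\left(q^{-n},q\tau z^{-1};q^{-n}\tau z^{-1};q,\tau z\right)=\frac{(q^2;q)_n}{q^n\tau^n(\beta;q)_n}\,{}_3\phi_2\!\left(q^{-n},q\tau z^{-1},q\tau z;q^2,0;q,q\right). \]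
   Context: $(a;q)_n:=\prod_{j=0}^{n-1}(1-aq^j)$. The monic polynomials $p_n^{(\alpha,\beta)}(x;q)$ satisfy $p_{-1}=0$, $p_0=1$, $p_{n+1}(x)=xp_n(x)-\tilde\gamma_{n-1}\tilde\gamma_np_{n-1}(x)$ with $\tilde\gamma_n=(1-\alpha q^n)/(1-\beta q^n)$; here $\alpha=q$. ${}_2\phi_1(a,b;c;q,w)=\sum_{k\ge0}\frac{(a,b;q)_k}{(c,q;q)_k}w^k$ and ${}_3\phi_2(a_1,a_2,a_3;b_1,b_2;q,w)=\sum_{k\ge0}\frac{(a_1,a_2,a_3;q)_k}{(b_1,b_2,q;q)_k}w^k$ (both terminating here because of the parameter $q^{-n}$). *)

(* Defs.v *)
From mathcomp Require Import all_boot all_order all_algebra.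
From mathcomp Require Import complex.
From mathcomp Require Import reals.
Set Implicit Arguments. Unset Strict Implicit. Unset Printing Implicit Defensive.
Import Order.TTheory GRing.Theory Num.Theory.
Local Open Scope ring_scope.

Definition qpoch {F : ringType} (a q : F) (n : nat) : F :=
  \prod_(j < n) (1 - a * q ^+ j).

Definition gammat {F : fieldType} (alpha beta q : F) (m : int) : F :=
  (1 - alpha * q ^ m) / (1 - beta * q ^ m).

(* pair (p_{n-1}, p_n) of the monic polynomials defined by
   p_{-1} = 0, p_0 = 1, p_{n+1} = X p_n - gamma~_{n-1} gamma~_n p_{n-1} *)
Fixpoint pq_pair {F : fieldType} (alpha beta q : F) (n : nat)
  : {poly F} * {poly F} :=
  match n with
  | 0 => (0, 1)
  | n'.+1 =>
      let pr := pq_pair alpha beta q n' in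
      (pr.2, 'X * pr.2
               - (gammat alpha beta q (n'%:Z - 1) * gammat alpha beta q n'%:Z)%:P
                 * pr.1)
  end.

Definition pq {F : fieldType} (alpha beta q : F) (n : nat) : {poly F} :=
  (pq_pair alpha beta q n).2.

Definition phi21 {F : fieldType} (N : nat) (a b c q w : F) : F :=
  \sum_(0 <= k < N.+1)
     (qpoch a q k * qpoch b q k) / (qpoch c q k * qpoch q q k) * w ^+ k.

Definition phi32 {F : fieldType} (N : nat) (a1 a2 a3 b1 b2 q w : F) : F :=
  \sum_(0 <= k < N.+1)
     (qpoch a1 q k * qpoch a2 q k * qpoch a3 q k)
       / (qpoch b1 q k * qpoch b2 q k * qpoch q q k) * w ^+ k.

(* Main.v *)
Require Import Defs.
From mathcomp Require Import all_boot all_order all_algebra.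
From mathcomp Require Import complex.
From mathcomp Require Import reals.
From mathcomp Require Import ring lra zify.
Import Order.TTheory GRing.Theory Num.Theory.
Local Open Scope ring_scope.


Lemma qpochS (F : fieldType) (a q : F) n : qpoch a q n.+1 = qpoch a q n * (1 - a * q ^+ n).
Proof. by rewrite /qpoch big_ord_recr. Qed.

Lemma qpoch0 (F : fieldType) (a q : F) : qpoch a q 0 = 1.
Proof. by rewrite /qpoch big_ord0. Qed.

Lemma qpochSl (F : fieldType) (a q : F) n : qpoch a q n.+1 = (1 - a) * qpoch (a * q) q n.
Proof.
rewrite /qpoch big_ord_recl expr0 mulr1; congr (_ * _).
by apply: eq_bigr => i _; rewrite /bump /= exprS mulrA.
Qed.

Lemma qpoch_zero (F : fieldType) (q : F) k : qpoch 0 q k = 1.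
Proof. by rewrite /qpoch big1 // => i _; rewrite mul0r subr0. Qed.

Lemma qpoch_neq0 (F : fieldType) (a q : F) n :
  (forall j, (j < n)%N -> 1 - a * q ^+ j != 0) -> qpoch a q n != 0.
Proof. by move=> h; rewrite /qpoch; apply/prodf_neq0 => i _; apply: h. Qed.

Lemma qpoch_split (F : fieldType) (a q : F) k d : qpoch a q (k + d) = qpoch a q k * \prod_(j < d) (1 - a * q ^+ (k + j)).
Proof. by rewrite /qpoch big_split_ord. Qed.

Lemma qpoch_le_neq0 (F : fieldType) (a q : F) k n : (k <= n)%N -> qpoch a q n != 0 -> qpoch a q k != 0.
Proof. by move=> /subnKC <-; rewrite qpoch_split mulf_eq0 negb_or => /andP[]. Qed.

Lemma qpoch_vanish (F : fieldType) (q : F) m k : q != 0 -> (m < k)%N -> qpoch (q ^- m) q k = 0.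
Proof.
move=> q0 /subnKC <-; rewrite qpoch_split qpochS; apply/eqP.
by rewrite !mulf_eq0 mulVf ?subrr ?eqxx ?orbT // expf_neq0.
Qed.




Lemma qqpoch_neq0 (F : fieldType) (q : F) n :
  (forall k, 1 - q ^+ k.+1 != 0) -> qpoch q q n != 0.
Proof. by move=> h; apply: qpoch_neq0 => j _; rewrite -exprS. Qed.

Lemma bqpoch_neq0 (F : fieldType) (b q : F) n :
  (forall k, 1 - b * q ^+ k != 0) -> qpoch b q n != 0.
Proof. by move=> h; apply: qpoch_neq0 => j _. Qed.

Lemma pq_main (F : fieldType) (q b x : F) (Y : nat -> F)
  (hqk : forall k, 1 - q ^+ k.+1 != 0) (hbk : forall k, 1 - b * q ^+ k != 0)
  (Y0 : Y 0%N = 1) (Y1 : (1 - q) / (1 - b) * Y 1%N = x)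
  (Yrec : forall n, (1 - q ^+ n.+2) * (Y n.+2 + Y n) = x * (1 - b * q ^+ n.+1) * Y n.+1) :
  forall n, (pq q b q n).[x] = qpoch q q n / qpoch b q n * Y n.
Proof.
have key : forall n, (pq_pair q b q n.+1).1.[x] = qpoch q q n / qpoch b q n * Y n /\
                   (pq_pair q b q n.+1).2.[x] = qpoch q q n.+1 / qpoch b q n.+1 * Y n.+1.
  elim=> [|n [IH1 IH2]].
    rewrite /= !qpoch0 Y0 !hornerE invr1 subr0; split=> //.
    by rewrite -Y1 qpochS qpoch0 [qpoch b _ _]qpochS qpoch0 !mul1r expr0 !mulr1.
  split; first by rewrite /= IH2.
  have -> : (pq_pair q b q n.+2).2 = 'X * (pq_pair q b q n.+1).2 -
     (gammat q b q n%:Z * gammat q b q n.+1%:Z)%:P * (pq_pair q b q n.+1).1.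
    have E0 : (n.+1%:Z - 1 = n%:Z)%R by rewrite -addn1 PoszD addrK.
    by rewrite -E0.
  move: IH1 IH2; set p1 := (pq_pair q b q n.+1).1; set p2 := (pq_pair q b q n.+1).2 => IH1 IH2.
  clearbody p1 p2.
  rewrite !hornerE IH1 IH2 /gammat -!exprnP.
  have h1 := hqk n; have h2 := hqk n.+1; have h3 := hbk n; have h4 := hbk n.+1.
  have hq := @qqpoch_neq0 _ q n hqk; have hb := @bqpoch_neq0 _ b q n hbk.
  have E : Y n.+2 = x * (1 - b * q ^+ n.+1) * Y n.+1 / (1 - q ^+ n.+2) - Y n.
    by rewrite -Yrec; field.
  rewrite E !qpochS !exprS.
  rewrite !exprS in h1 h2 h4.
  rewrite /GRing.GRing_mul__canonical__SemiGroup_Law /=.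
  field; rewrite ?h1 ?h2 ?h3 ?h4 ?hq ?hb //.
by case=> [|n]; [rewrite /pq /= hornerC !qpoch0 Y0 invr1 !mulr1|case: (key n)].
Qed.

Set Implicit Arguments. Unset Strict Implicit.


Definition conv (F : fieldType) (s t : nat -> F) n := \sum_(k < n.+1) s k * t (n - k)%N.
Definition sh (F : fieldType) (s : nat -> F) k := if k is k'.+1 then s k' else 0.

Lemma conv_ext (F : fieldType) (s s' t t' : nat -> F) n :
  (forall k, s k = s' k) -> (forall k, t k = t' k) -> conv s t n = conv s' t' n.
Proof. by move=> hs ht; apply: eq_bigr => i _; rewrite hs ht. Qed.

Lemma conv_shl (F : fieldType) (s t : nat -> F) n : conv (sh s) t n.+1 = conv s t n.
Proof. by rewrite /conv big_ord_recl /= mul0r add0r. Qed.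

Lemma conv_shr (F : fieldType) (s t : nat -> F) n : conv s (sh t) n.+1 = conv s t n.
Proof.
rewrite /conv big_ord_recr /= subnn /= mulr0 addr0.
by apply: eq_bigr => i _; rewrite subSn // -ltnS.
Qed.

Lemma conv_lin (F : fieldType) (s t : nat -> F) c1 c2 m :
  conv (fun k => s k - c1 * sh s k) (fun k => t k - c2 * sh t k) m =
  conv s t m - c1 * conv (sh s) t m - c2 * conv s (sh t) m + c1 * c2 * conv (sh s) (sh t) m.
Proof.
rewrite /conv !mulr_sumr -!sumrB -big_split; apply: eq_bigr => i _ /=; ring.
Qed.

Lemma conv_exp (F : fieldType) (s t : nat -> F) c1 c2 n :
  conv (fun k => s k - c1 * sh s k) (fun k => t k - c2 * sh t k) n.+2 =
  conv s t n.+2 - c1 * conv s t n.+1 - c2 * conv s t n.+1 + c1 * c2 * conv s t n.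
Proof. by rewrite conv_lin !conv_shl conv_shr conv_shr. Qed.

Lemma conv_q (F : fieldType) (q : F) (s t : nat -> F) n :
  conv (fun k => q ^+ k * s k) (fun k => q ^+ k * t k) n = q ^+ n * conv s t n.
Proof.
rewrite /conv mulr_sumr; apply: eq_bigr => i _.
have hi : (i <= n)%N by rewrite -ltnS.
by rewrite -[in q ^+ n](subnKC hi) exprD; ring.
Qed.

Definition Aseq (F : fieldType) (a q z : F) k := qpoch a q k / qpoch q q k * z ^+ k.
Definition Bsq (F : fieldType) (b q z : F) k := qpoch b q k / qpoch q q k / z ^+ k.

Lemma S_rec (F : fieldType) (q a b z x be : F) (hz : z != 0)
  (hqk : forall k, 1 - q ^+ k.+1 != 0)
  (hab : a * b = q ^+ 2) (hbx : a * z + b / z = be * x) (hx : x = z + z^-1) n :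
  let S := conv (Aseq a q z) (Bsq b q z) in
  (1 - q ^+ n.+2) * (S n.+2 + S n) = x * (1 - be * q ^+ n.+1) * S n.+1.
Proof.
move=> S.
have hA : forall k, Aseq a q z k - z * sh (Aseq a q z) k =
   q ^+ k * Aseq a q z k - (a * z) * sh (fun k => q ^+ k * Aseq a q z k) k.
  case=> [|k] /=; first by rewrite expr0 mul1r !mulr0.
  have h1 := hqk k; have h2 := @qqpoch_neq0 _ q k hqk.
  rewrite /Aseq !qpochS !exprS; rewrite exprS in h1; field.
  by rewrite h2 h1.
have hB : forall k, Bsq b q z k - z^-1 * sh (Bsq b q z) k =
   q ^+ k * Bsq b q z k - (b / z) * sh (fun k => q ^+ k * Bsq b q z k) k.
  case=> [|k] /=; first by rewrite expr0 mul1r !mulr0.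
  have h1 := hqk k; have h2 := @qqpoch_neq0 _ q k hqk.
  rewrite /Bsq !qpochS !exprS; rewrite exprS in h1; field.
  by rewrite h2 h1 hz expf_neq0.
have E := conv_ext n.+2 hA hB.
rewrite conv_exp conv_exp !conv_q -/S in E.
have E2 : (1 - q ^+ n.+2) * (S n.+2 + S n) - x * (1 - be * q ^+ n.+1) * S n.+1 =
   (S n.+2 - z * S n.+1 - z^-1 * S n.+1 + z * z^-1 * S n) -
   (q ^+ n.+2 * S n.+2 - a * z * (q ^+ n.+1 * S n.+1) - b / z * (q ^+ n.+1 * S n.+1) +
       a * z * (b / z) * (q ^+ n * S n))
   + q ^+ n.+1 * S n.+1 * (be * x - (a * z + b / z)) + q ^+ n * S n * (a * b - q ^+ 2).
  rewrite hx !exprS; field; exact: hz.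
by apply/eqP; rewrite -subr_eq0 E2 E hbx hab !subrr !mulr0 !addr0.
Qed.


Definition rho (F : fieldType) (a a' q : F) k :=
  q ^+ k * (qpoch a q k * qpoch a' q k) / (qpoch (q * q) q k * qpoch q q k).
Definition Phi (F : fieldType) (a a' q : F) m :=
  \sum_(k < m.+1) qpoch (q ^- m) q k * rho a a' q k.

Lemma Phi_widen (F : fieldType) (a a' q : F) m d : q != 0 ->
  Phi a a' q m = \sum_(k < (m.+1 + d)%N) qpoch (q ^- m) q k * rho a a' q k.
Proof.
move=> q0; elim: d => [|d IH]; first by rewrite addn0.
by rewrite addnS big_ord_recr /= -IH qpoch_vanish ?mul0r ?addr0 // ltnS leq_addr.
Qed.

Lemma qqqpoch_neq0 (F : fieldType) (q : F) n :
  (forall k, 1 - q ^+ k.+1 != 0) -> qpoch (q * q) q n != 0.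
Proof. by move=> h; apply: qpoch_neq0 => j _; rewrite -mulrA -exprS -exprS. Qed.

Lemma Phi_rec (F : fieldType) (a a' q : F) n (q0 : q != 0)
  (hqk : forall k, 1 - q ^+ k.+1 != 0) :
  let p := a * a' in
  (1 - q ^+ n.+3) * Phi a a' q n.+2 - (a + a') * Phi a a' q n.+1
  + q ^+ n.+1 * (q ^+ 2 + p) * Phi a a' q n.+1 + p * (1 - q ^+ n.+1) * Phi a a' q n = 0.
Proof.
move=> p.
pose r := rho a a' q.
have pw : forall k, (a + a') * r k =
   (q ^+ k)^-1 * ((1 + p * (q ^+ k * q ^+ k)) * r k
       - (1 - q ^+ k.+1) * (1 - q ^+ k.+2) / q * r k.+1).
  move=> k; rewrite /r /rho !qpochS.
  have h1 := hqk k; have h2 := hqk k.+1.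
  have h3 := @qqpoch_neq0 _ q k hqk; have h4 := @qqqpoch_neq0 _ q k hqk.
  rewrite /p !exprS; rewrite !exprS in h1 h2; field.
  by rewrite mulrA in h2; rewrite h1 h2 h3 h4 q0 expf_neq0.
pose e m k := qpoch (q ^- m) q k.
pose C k := (1 - q ^+ n.+3) * e n.+2 k - e n.+1 k * (q ^+ k)^-1 * (1 + p * (q ^+ k * q ^+ k))
   + q ^+ n.+1 * (q ^+ 2 + p) * e n.+1 k + p * (1 - q ^+ n.+1) * e n k.
pose g k := e n.+1 k * (q ^+ k)^-1 * ((1 - q ^+ k.+1) * (1 - q ^+ k.+2) / q).
transitivity (\sum_(k < n.+3) (C k * r k + g k * r k.+1)).
  rewrite (Phi_widen a a' n.+1 1 q0) (Phi_widen a a' n 2 q0) !addn1 !addn2.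
  rewrite /Phi !mulr_sumr -!sumrB -!big_split; apply: eq_bigr => k _ /=.
  rewrite [(a + a') * _]mulrCA -/(r k) pw /C /g /e; ring.
rewrite big_split /= [X in X + _]big_ord_recl [X in _ + X]big_ord_recr /=.
have -> : g n.+2 = 0 by rewrite /g /e qpoch_vanish // !mul0r.
rewrite mul0r addr0 -addrA -big_split /=.
have -> : C 0%N = 0.
  rewrite /C /e !qpoch0 expr0 invr1 /p !exprS; ring.
rewrite mul0r add0r big1 // => k _.
rewrite /bump /= add1n -mulrDl.
suff -> : C k.+1 + g k = 0 by rewrite mul0r.
rewrite /C /g /e.
have hqm : forall m, q ^- m.+1 * q = q ^- m.
  by move=> m; rewrite exprS invfM mulrAC mulVf // mul1r.
have E2 : qpoch (q ^- n.+2) q k.+1 = (1 - q ^- n.+2) * qpoch (q ^- n.+1) q k.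
  by rewrite qpochSl hqm.
have E1 : qpoch (q ^- n.+1) q k.+1 = qpoch (q ^- n.+1) q k * (1 - q ^- n.+1 * q ^+ k).
  by rewrite qpochS.
have E0 : qpoch (q ^- n) q k.+1 = qpoch (q ^- n.+1) q k * (1 - q ^- n.+1 * q ^+ k)
     * (1 - q ^- n.+1 * q ^+ k.+1) / (1 - q ^- n.+1).
  have hn : 1 - q ^- n.+1 != 0.
    rewrite -[1 - _](@mulfK _ (q ^+ n.+1)) ?expf_neq0 // mulrBl mul1r mulVf ?expf_neq0 //.
    by rewrite mulf_neq0 ?invr_neq0 ?expf_neq0 // -opprB oppr_eq0 hqk.
  by apply: (mulIf hn); rewrite divfK // -(hqm n) mulrC -qpochSl !qpochS -mulrA.

rewrite E2 E1 E0.
set E := qpoch (q ^- n.+1) q k.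
have hq1 := hqk n; have hq2 := hqk n.+1.
rewrite /p !exprS !invfM; rewrite !exprS in hq1 hq2.
field.
by rewrite q0 !expf_neq0 //= -opprB oppr_eq0 hq1.
Qed.


Definition Wseq (F : fieldType) (q t z : F) m :=
  (1 - q ^+ m.+1) / ((1 - q) * q ^+ m * t ^+ m) * Phi (q * t * z^-1) (q * t * z) q m.

Lemma W_rec (F : fieldType) (q t z be : F) n (q0 : q != 0)
  (hqk : forall k, 1 - q ^+ k.+1 != 0) (hz : z != 0) (ht : t != 0)
  (hrel : q * (t + t^-1) = be * (z + z^-1)) :
  (1 - q ^+ n.+2) * (Wseq q t z n.+2 + Wseq q t z n) =
    (z + z^-1) * (1 - be * q ^+ n.+1) * Wseq q t z n.+1.
Proof.
have H := Phi_rec (q * t * z^-1) (q * t * z) n q0 hqk.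
move: H; rewrite /Wseq.
set P2 := Phi _ _ _ n.+2; set P1 := Phi _ _ _ n.+1; set P0 := Phi _ _ _ n => H.
have h0 := hqk 0%N; have h1 := hqk n; have h2 := hqk n.+1; have h3 := hqk n.+2.
rewrite expr1 in h0.
apply/eqP; rewrite -subr_eq0.
have -> : (1 - q ^+ n.+2) *
  ((1 - q ^+ n.+3) / ((1 - q) * q ^+ n.+2 * t ^+ n.+2) * P2 +
   (1 - q ^+ n.+1) / ((1 - q) * q ^+ n * t ^+ n) * P0) -
  (z + z^-1) * (1 - be * q ^+ n.+1) *
  ((1 - q ^+ n.+2) / ((1 - q) * q ^+ n.+1 * t ^+ n.+1) * P1) =
  (1 - q ^+ n.+2) / ((1 - q) * q ^+ n.+2 * t ^+ n.+2) *
   ((1 - q ^+ n.+3) * P2 - (q * t * z^-1 + q * t * z) * P1 +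
    q ^+ n.+1 * (q ^+ 2 + q * t * z^-1 * (q * t * z)) * P1 +
    q * t * z^-1 * (q * t * z) * (1 - q ^+ n.+1) * P0)
  + (1 - q ^+ n.+2) / ((1 - q) * t ^+ n.+1) * P1 * (be * (z + z^-1) - q * (t + t^-1)).
  rewrite !exprS; rewrite !exprS in h1 h2 h3. field.
  by rewrite h0 q0 ht hz !expf_neq0.
by rewrite H mulr0 add0r hrel subrr mulr0.
Qed.


Lemma W0 (F : fieldType) (q t z : F) (hqk : forall k, 1 - q ^+ k.+1 != 0) : Wseq q t z 0 = 1.
Proof.
have h := hqk 0%N; rewrite expr1 in h.
rewrite /Wseq /Phi big_ord1 /rho !qpoch0 !expr0 !mulr1 !divr1 expr1 mulr1 divff //; exact: mulr1.
Qed.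

Lemma W1 (F : fieldType) (q t z be : F) (q0 : q != 0)
  (hqk : forall k, 1 - q ^+ k.+1 != 0) (hz : z != 0) (ht : t != 0) (hb : 1 - be != 0)
  (hrel : q * (t + t^-1) = be * (z + z^-1)) :
  (1 - q) / (1 - be) * Wseq q t z 1 = z + z^-1.
Proof.
have h0 := hqk 0%N; have h1 := hqk 1%N; rewrite expr1 in h0.
rewrite /Wseq /Phi big_ord_recr big_ord1 /= /rho !qpochS !qpoch0 !expr0 !expr1.
have -> : z + z^-1 = ((z + z^-1) - be * (z + z^-1)) / (1 - be) by field; rewrite hb.
rewrite -hrel.
rewrite !exprS expr0 mulr1 in h1.
field.
by rewrite hb h0 h1 q0 ht hz oner_eq0.
Qed.

Lemma S0 (F : fieldType) (a b q z : F) : conv (Aseq a q z) (Bsq b q z) 0 = 1.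
Proof. by rewrite /conv big_ord1 /Aseq /Bsq !qpoch0 !expr0 !divr1 !mulr1. Qed.

Lemma S1 (F : fieldType) (q t z be : F) (q0 : q != 0)
  (hqk : forall k, 1 - q ^+ k.+1 != 0) (hz : z != 0) (ht : t != 0) (hb : 1 - be != 0)
  (hrel : q * (t + t^-1) = be * (z + z^-1)) :
  (1 - q) / (1 - be) * conv (Aseq (q * t * z^-1) q z) (Bsq (q * t^-1 * z) q z) 1 = z + z^-1.
Proof.
have h0 := hqk 0%N; rewrite expr1 in h0.
rewrite /conv big_ord_recr big_ord1 /= /Aseq /Bsq !qpochS !qpoch0 !expr0 !expr1.
have -> : z + z^-1 = ((z + z^-1) - be * (z + z^-1)) / (1 - be) by field; rewrite hb.
rewrite -hrel.
field.
by rewrite hb h0 ht hz oner_eq0.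
Qed.

Lemma qpoch_rev (F : fieldType) (b c q : F) n k : (k <= n)%N ->
  ((0 < n)%N -> c * b * q ^+ n.-1 = 1) ->
  qpoch b q n = qpoch b q (n - k) * qpoch c q k * b ^+ k * \prod_(j < k) (- q ^+ (n.-1 - j)).
Proof.
move=> + hbc; elim: k => [|k IH] hk.
  by rewrite subn0 qpoch0 expr0 big_ord0 !mulr1.
have hk' : (k <= n)%N by apply: ltnW.
rewrite IH // -(subnSK hk) qpochS [qpoch c q k.+1]qpochS exprS big_ord_recr /=.
have e : (n - k.+1 = n.-1 - k)%N by lia.
have key : 1 - b * q ^+ (n - k.+1) = (1 - c * q ^+ k) * b * - q ^+ (n.-1 - k).
  transitivity (1 - b * q ^+ (n.-1 - k)); first by rewrite e.
  transitivity (c * b * q ^+ n.-1 - b * q ^+ (n.-1 - k)); first by rewrite hbc //; lia.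
  have hk2 : (k <= n.-1)%N by lia.
  rewrite -{1}(subnK hk2) exprD; ring.
rewrite key; ring.
Qed.

Lemma zpow_split (F : fieldType) (z : F) n k : z != 0 -> (k <= n)%N ->
  z ^ ((2 * k)%:Z - n%:Z) = z ^+ k / z ^+ (n - k).
Proof.
move=> hz hk.
have -> : ((2 * k)%:Z - n%:Z = k%:Z + - (n - k)%:Z)%R by lia.
by rewrite expfzDr // -invr_expz.
Qed.

Unset Implicit Arguments. Set Strict Implicit.
Local Open Scope complex_scope.


Lemma facts {R : realType} {q beta : R} (hq0 : 0 < q) (hq1 : q < 1) (hbeta : beta < 1) :
  [/\ q%:C != 0 :> R[i], forall k, 1 - q%:C ^+ k.+1 != 0 :> R[i]
    & forall k, 1 - beta%:C * q%:C ^+ k != 0 :> R[i]].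
Proof.
have nz : forall r : R, r != 0 -> r%:C != 0 :> R[i].
  by move=> r hr; apply: contra hr => /eqP [->].
split.
- by apply: nz; rewrite gt_eqF.
- move=> k; rewrite -rmorphXn -[1]/(1%:C) -rmorphB; apply: nz.
  rewrite subr_eq0 eq_sym lt_eqF //.
  by rewrite exprn_ilt1 // ltW.
- move=> k; rewrite -rmorphXn -rmorphM -[1]/(1%:C) -rmorphB; apply: nz.
  have h1 : 0 < q ^+ k by apply: exprn_gt0.
  have h2 : q ^+ k <= 1 by apply: exprn_ile1; rewrite ?ltW.
  rewrite subr_eq0 eq_sym lt_eqF //; nra.
Qed.

Theorem proposition2p18 (R : realType) (q beta : R) (n : nat) (z tau : R[i])
  (hq0 : 0 < q) (hq1 : q < 1) (hbeta : beta < 1)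
  (hz : z != 0) (htau : tau != 0)
  (hrel : q%:C * (tau + tau^-1) = beta%:C * (z + z^-1)) :
  let Q := q%:C in
  let B := beta%:C in
  let P := (pq Q B Q n).[z + z^-1] in
  [/\ P = qpoch Q Q n / qpoch B Q n *
          \sum_(0 <= k < n.+1)
             qpoch (Q * tau * z^-1) Q k * qpoch (Q * tau^-1 * z) Q (n - k)
               / (qpoch Q Q k * qpoch Q Q (n - k)) * z ^ ((2 * k)%:Z - n%:Z),
      qpoch (Q ^- n * tau * z^-1) Q n != 0 ->
        P = qpoch (Q * tau^-1 * z) Q n / (z ^+ n * qpoch B Q n) *
            phi21 n (Q ^- n) (Q * tau * z^-1) (Q ^- n * tau * z^-1) Q (tau * z)
    & P = qpoch (Q ^+ 2) Q n / (Q ^+ n * tau ^+ n * qpoch B Q n) *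
          phi32 n (Q ^- n) (Q * tau * z^-1) (Q * tau * z) (Q ^+ 2) 0 Q Q].
Proof.
move=> Q B P.
have [q0 hqk hbk] := facts hq0 hq1 hbeta.
rewrite -/Q -/B in q0 hqk hbk hrel.
have hb1 : 1 - B != 0 by have := hbk 0%N; rewrite expr0 mulr1.
set a := Q * tau * z^-1; set b := Q * tau^-1 * z.
have hab : a * b = Q ^+ 2 by rewrite /a /b expr2; field; rewrite htau hz.
have hbx : a * z + b / z = B * (z + z^-1) by rewrite -hrel /a /b; field; rewrite htau hz.
have HS : P = qpoch Q Q n / qpoch B Q n * conv (Aseq a Q z) (Bsq b Q z) n.
  apply: pq_main => //; first exact: S0.
    exact: S1.
  by move=> m; apply: S_rec.
have HW : P = qpoch Q Q n / qpoch B Q n * Wseq Q tau z n.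
  apply: pq_main => //; first exact: W0.
    exact: W1.
  by move=> m; apply: W_rec.
have hqq : forall k, qpoch Q Q k != 0 by move=> k; apply: qqpoch_neq0.
split.
- rewrite HS; congr (_ * _); rewrite big_mkord /conv; apply: eq_bigr => k _.
  have hk : (k <= n)%N by rewrite -ltnS.
  rewrite zpow_split // /Aseq /Bsq; field.
  by rewrite !hqq expf_neq0.
- move=> hc; rewrite HS /phi21 big_mkord /conv !mulr_sumr; apply: eq_bigr => k _.
  have hk : (k <= n)%N by rewrite -ltnS.
  have Eb : qpoch b Q n = qpoch b Q (n - k) * qpoch (Q ^- n * tau * z^-1) Q k * b ^+ k *
      \prod_(j < k) (- Q ^+ (n.-1 - j)).
    apply: qpoch_rev => // hn.
    rewrite -[in Q ^- n](prednK hn) exprS /b; field.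
    by rewrite q0 htau hz expf_neq0.
  have Eq : qpoch Q Q n = qpoch Q Q (n - k) * qpoch (Q ^- n) Q k * Q ^+ k *
      \prod_(j < k) (- Q ^+ (n.-1 - j)).
    apply: qpoch_rev => // hn.
    rewrite -[in Q ^- n](prednK hn) exprS; field.
    by rewrite q0 expf_neq0.
  have hD : \prod_(j < k) (- Q ^+ (n.-1 - j)) != 0.
    by apply/prodf_neq0 => j _; rewrite oppr_eq0 expf_neq0.
  have hck : qpoch (Q ^- n * tau * z^-1) Q k != 0 by apply: qpoch_le_neq0 hc.
  have hzn : z ^+ n = z ^+ (n - k) * z ^+ k by rewrite -exprD subnK.
  have hBn : qpoch B Q n != 0 by apply: bqpoch_neq0.
  rewrite Eb Eq hzn /Aseq /Bsq /b !exprMn !exprVn.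
  move: hD hck; set D := \prod_(j < k) _; set Ck := qpoch (Q ^- n * tau * z^-1) Q k => hD hck.
  field.
  by rewrite !hqq hck hBn !expf_neq0.
- have hQ1 : 1 - Q != 0 by have := hqk 0%N; rewrite expr1.
  have hQQ : qpoch (Q * Q) Q n = qpoch Q Q n * (1 - Q ^+ n.+1) / (1 - Q).
    apply: (mulIf hQ1); rewrite divfK // mulrC -qpochSl qpochS exprS //.
  have hBn : qpoch B Q n != 0 by apply: bqpoch_neq0.
  rewrite HW /phi32 /Wseq /Phi big_mkord expr2 hQQ mulrA; congr (_ * _).
    field. by rewrite hBn !expf_neq0 //=; exact: hQ1.
  apply: eq_big => // k _; rewrite qpoch_zero /rho.
  have h1 := @qqqpoch_neq0 _ Q k hqk.
  field; by rewrite h1 hqq.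
Qed.
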